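(* Let $(X,d)$ be a complete metric space, let $\alpha\in[0,1)$, and let $F:(0,\infty)\to\mathbb{R}$ be a function having a finite right limit $F(t+0):=\lim_{s\to t^+}F(s)$ at every $t>0$. Suppose $T:X\to X$ satisfies, for all $x,y\in X$ with $Tx\neq Ty$, $F(d(Tx,Ty))\le\alpha F(d(x,y))$. Assume further: $(C_1')$ for $t,s\in(0,\infty)$, $t\le s$ implies $\alpha F(t)<F(s)$; and $(C_2')$ $F(t+0)>0$ for every $t\in(0,\infty)$. Then $T$ is a Picard operator.
   Context: $T$ is a Picard operator if $T$ has a unique fixed point $u\in X$ and for every $x\in X$ the sequence $(T^nx)_{n\in\mathbb{N}}$ converges to $u$. *)

(* Defs.v *)
From Stdlib Require Import Reals.
Open Scope R_scope.

Definition is_metric {X : Type} (d : X -> X -> R) : Prop :=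
  (forall x y, 0 <= d x y) /\
  (forall x y, d x y = 0 <-> x = y) /\
  (forall x y, d x y = d y x) /\
  (forall x y z, d x z <= d x y + d y z).

Definition seq_converges {X : Type} (d : X -> X -> R) (u : nat -> X) (l : X) : Prop :=
  forall eps, 0 < eps -> exists N : nat, forall n, (N <= n)%nat -> d (u n) l < eps.

Definition is_cauchy {X : Type} (d : X -> X -> R) (u : nat -> X) : Prop :=
  forall eps, 0 < eps -> exists N : nat,
    forall m n, (N <= m)%nat -> (N <= n)%nat -> d (u m) (u n) < eps.

Definition complete_metric {X : Type} (d : X -> X -> R) : Prop :=
  forall u : nat -> X, is_cauchy d u -> exists l, seq_converges d u l.

Definition right_limit (F : R -> R) (t L : R) : Prop :=
  forall eps, 0 < eps -> exists delta, 0 < delta /\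
    forall s, t < s < t + delta -> Rabs (F s - L) < eps.

Definition picard_operator {X : Type} (d : X -> X -> R) (T : X -> X) : Prop :=
  exists u : X, T u = u /\ (forall v, T v = v -> v = u) /\
    forall x, seq_converges d (fun n => Nat.iter n T x) u.

(* Main.v *)
Require Import Defs.
From Stdlib Require Import Reals.
From Stdlib Require Import Lra Lia Psatz Classical.
Open Scope R_scope.

Lemma iter_add_gen {X : Type} (T : X -> X) : forall p n x,
  Nat.iter (p + n) T x = Nat.iter p T (Nat.iter n T x).
Proof. induction p; intros; simpl; [reflexivity | rewrite IHp; reflexivity]. Qed.

Lemma iterS_gen {X : Type} (T : X -> X) : forall n x,
  Nat.iter n T (T x) = Nat.iter (S n) T x.
Proof. induction n; intros; simpl; [reflexivity | rewrite IHn; reflexivity]. Qed.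

Lemma srch (eps : R) (g : nat -> R) : g 0%nat < eps -> forall k, eps <= g k ->
  exists i, g i < eps /\ eps <= g (S i).
Proof.
  intros H0 k; induction k; intros Hk; [lra|].
  destruct (Rlt_or_le (g k) eps) as [h|h]; [exists k; auto | apply IHk; auto].
Qed.

Theorem mainTheorem9 (X : Type) (d : X -> X -> R) (alpha : R) (F : R -> R) (T : X -> X)
  (HX : inhabited X) (Hd : is_metric d) (Hc : complete_metric d)
  (Halpha : 0 <= alpha < 1)
  (HFlim : forall t, 0 < t -> exists L, right_limit F t L)
  (HT : forall x y, T x <> T y -> F (d (T x) (T y)) <= alpha * F (d x y))
  (HC1 : forall t s, 0 < t -> 0 < s -> t <= s -> alpha * F t < F s)
  (HC2 : forall t L, 0 < t -> right_limit F t L -> 0 < L) :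
  picard_operator d T.
Proof.
  destruct Hd as [Hpos [Hzero [Hsym Htri]]].
  assert (dxx : forall a, d a a = 0) by (intro a; apply Hzero; reflexivity).
  assert (Fpos : forall t, 0 < t -> 0 < F t).
  { intros t Ht. specialize (HC1 t t Ht Ht (Rle_refl t)). nra. }
  assert (dpos : forall a b, a <> b -> 0 < d a b).
  { intros a b Hab. destruct (Hpos a b) as [h|h]; auto.
    exfalso; apply Hab; apply Hzero; auto. }
  assert (contr1 : forall x y, T x <> T y -> d (T x) (T y) < d x y).
  { intros x y Hn. assert (x <> y) by (intro; subst; auto).
    pose proof (dpos _ _ Hn). pose proof (dpos _ _ H).
    destruct (Rlt_or_le (d (T x) (T y)) (d x y)) as [h|h]; auto.
    exfalso. pose proof (HT x y Hn). pose proof (HC1 _ _ H1 H0 h). lra. }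
  assert (contr : forall x y, d (T x) (T y) <= d x y).
  { intros x y. destruct (classic (T x = T y)) as [E|E].
    - rewrite E, dxx. apply Hpos.
    - left; apply contr1; auto. }
  assert (iterF : forall p x y, Nat.iter p T x <> Nat.iter p T y ->
     F (d (Nat.iter p T x) (Nat.iter p T y)) <= alpha ^ p * F (d x y)).
  { induction p; intros x y H; simpl.
    - lra.
    - simpl in H.
      assert (Nat.iter p T x <> Nat.iter p T y) by (intro E; apply H; rewrite E; auto).
      eapply Rle_trans; [apply HT; auto|]. rewrite Rmult_assoc.
      apply Rmult_le_compat_l; [lra|]. apply IHp; auto. }
  assert (iterd : forall p x y, d (Nat.iter p T x) (Nat.iter p T y) <= d x y).
  { induction p; intros; simpl; [lra|]. eapply Rle_trans; [apply contr|apply IHp]. }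
  assert (iterds : forall p x y, Nat.iter (S p) T x <> Nat.iter (S p) T y ->
     d (Nat.iter (S p) T x) (Nat.iter (S p) T y) < d x y).
  { intros p x y H. simpl in *. eapply Rlt_le_trans; [apply contr1; auto|apply iterd]. }
  assert (powsmall : forall C D, 0 < C -> 0 < D -> exists q, alpha ^ (S q) * C <= alpha * D).
  { intros C D HC HD.
    assert (Rabs alpha < 1) by (rewrite Rabs_right; lra).
    assert (0 < D / C) by (apply Rdiv_lt_0_compat; auto).
    destruct (pow_lt_1_zero alpha H (D / C) H0) as [M HM].
    specialize (HM M (Nat.le_refl M)).
    rewrite Rabs_right in HM by (apply Rle_ge, pow_le; lra).
    exists M. assert (alpha ^ M * C < D).
    { replace D with (D / C * C) by (field; lra). apply Rmult_lt_compat_r; auto. }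
    simpl. rewrite Rmult_assoc. apply Rmult_le_compat_l; lra. }
  assert (uniq : forall u v, T u = u -> T v = v -> v = u).
  { intros u v Hu Hv. destruct (classic (v = u)) as [E|E]; auto. exfalso.
    assert (T v <> T u) by (rewrite Hu, Hv; auto).
    pose proof (HT v u H). rewrite Hu, Hv in H0.
    pose proof (dpos _ _ E). pose proof (HC1 _ _ H1 H1 (Rle_refl _)). lra. }
  assert (orbit : forall x0, exists l, T l = l /\ seq_converges d (fun n => Nat.iter n T x0) l).
  { intro x0.
    set (dd := fun n => d (Nat.iter n T x0) (Nat.iter (S n) T x0)).
    assert (dec : forall n, dd (S n) <= dd n).
    { intro n. unfold dd. simpl. apply contr. }
    assert (dd_mono : forall n k, (n <= k)%nat -> dd k <= dd n).
    { intros n k Hnk. induction Hnk; [lra|]. eapply Rle_trans; [apply dec|auto]. }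
    assert (dd0 : forall eta, 0 < eta -> exists N, forall j, (N <= j)%nat -> dd j < eta).
    { intros eta Heta. destruct (classic (exists N, dd N < eta)) as [[N HN]|Hno].
      - exists N; intros j Hj; eapply Rle_lt_trans; [apply dd_mono; eauto| auto].
      - exfalso.
        assert (Hall : forall n, eta <= dd n).
        { intro n; apply Rnot_lt_le; intro; apply Hno; eauto. }
        assert (Hb : forall n, F (dd n) <= alpha ^ n * F (dd 0%nat)).
        { intro n. assert (Nat.iter n T x0 <> Nat.iter n T (T x0)).
          { rewrite iterS_gen. intro E. specialize (Hall n). unfold dd in Hall.
            rewrite E, dxx in Hall. lra. }
          pose proof (iterF n x0 (T x0) H). rewrite iterS_gen in H0. exact H0. }
        assert (0 < dd 0%nat) by (specialize (Hall 0%nat); lra).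
        destruct (powsmall (F (dd 0%nat)) (F eta)) as [q Hq]; auto.
        pose proof (Hb (S q)). pose proof (Hall (S q)).
        pose proof (HC1 eta (dd (S q)) Heta ltac:(lra) H1). lra. }
    assert (Hcau : is_cauchy d (fun n => Nat.iter n T x0)).
    { intros eps Heps. apply NNPP; intro Hnc.
      destruct (HFlim eps Heps) as [L HL]. pose proof (HC2 _ _ Heps HL) as HLpos.
      destruct (HL 1 Rlt_0_1) as [delta [Hdel Hdl]].
      destruct (powsmall (L + 1) (F eps)) as [q Hq]; try lra; auto.
      remember (S q) as p eqn:Hp.
      pose proof (pos_INR p) as Pp.
      set (eta := delta / (2 * INR p + 2)).
      assert (Heta : 0 < eta) by (unfold eta; apply Rdiv_lt_0_compat; lra).
      assert (Heq : eta * (2 * INR p + 2) = delta) by (unfold eta; field; lra).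
      destruct (dd0 eta Heta) as [N HN].
      assert (sumb : forall k a, (N <= a)%nat ->
                d (Nat.iter a T x0) (Nat.iter (k + a) T x0) <= INR k * eta).
      { induction k; intros a Ha.
        - simpl. rewrite dxx. lra.
        - rewrite S_INR.
          eapply Rle_trans; [apply (Htri _ (Nat.iter (k + a) T x0))|].
          pose proof (IHk a Ha). assert (Hle : (N <= k + a)%nat) by lia. pose proof (HN (k + a)%nat Hle).
          unfold dd in H0. simpl. simpl in H0. lra. }
      assert (core : forall n0 k, (N <= n0)%nat ->
          eps <= d (Nat.iter (k + (p + n0)) T x0) (Nat.iter (p + n0) T x0) -> False).
      { intros n0 k HN0 Hk.
        destruct (srch eps (fun i => d (Nat.iter (i + (p + n0)) T x0) (Nat.iter (p + n0) T x0)))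
          with (k := k) as [i [Hi1 Hi2]]; auto.
        { simpl. rewrite dxx. lra. }
        cbv beta in Hi1, Hi2.
        set (A := Nat.iter (S i + n0) T x0). set (B := Nat.iter n0 T x0).
        assert (EA : Nat.iter (S i + (p + n0)) T x0 = Nat.iter p T A).
        { unfold A. rewrite <- iter_add_gen. f_equal. lia. }
        assert (EB : Nat.iter (p + n0) T x0 = Nat.iter p T B).
        { unfold B. apply iter_add_gen. }
        assert (Hc1 : d (Nat.iter p T A) (Nat.iter p T B) < eps + eta).
        { rewrite <- EA, <- EB.
          eapply Rle_lt_trans; [apply (Htri _ (Nat.iter (i + (p + n0)) T x0))|].
          assert (Hle : (N <= i + (p + n0))%nat) by lia. pose proof (HN (i + (p + n0))%nat Hle). unfold dd in H.
          rewrite Hsym in H. simpl. simpl in H. lra. }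
        rewrite EA, EB in Hi2.
        assert (HA : d A (Nat.iter p T A) <= INR p * eta).
        { unfold A. rewrite <- iter_add_gen. apply sumb. lia. }
        assert (HB : d (Nat.iter p T B) B <= INR p * eta).
        { rewrite Hsym. unfold B. rewrite <- iter_add_gen. apply sumb. lia. }
        assert (Ha1 : d A B < eps + delta).
        { eapply Rle_lt_trans; [apply (Htri _ (Nat.iter p T A))|].
          pose proof (Htri (Nat.iter p T A) (Nat.iter p T B) B). nra. }
        assert (Hne : Nat.iter p T A <> Nat.iter p T B).
        { intro E. rewrite E, dxx in Hi2. lra. }
        assert (Ha2 : d (Nat.iter p T A) (Nat.iter p T B) < d A B) by (rewrite Hp in *; apply iterds; auto).
        assert (HFa : F (d A B) < L + 1).
        { pose proof (Hdl (d A B) ltac:(lra)). apply Rabs_def2 in H. lra. }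
        pose proof (iterF p A B Hne).
        assert (Hcp : 0 < d (Nat.iter p T A) (Nat.iter p T B)) by lra.
        pose proof (HC1 eps _ Heps Hcp Hi2).
        assert (alpha ^ p * F (d A B) <= alpha ^ p * (L + 1)).
        { apply Rmult_le_compat_l; [apply pow_le; lra| lra]. }
        subst p. lra. }
      apply Hnc. exists (N + p)%nat. intros m n Hm Hn.
      destruct (Rlt_or_le (d (Nat.iter m T x0) (Nat.iter n T x0)) eps) as [h|h]; auto.
      exfalso.
      destruct (Nat.lt_total m n) as [h'|[h'|h']].
      - apply (core (m - p)%nat (n - m)%nat); [lia|].
        replace (n - m + (p + (m - p)))%nat with n by lia.
        replace (p + (m - p))%nat with m by lia. rewrite Hsym; auto.
      - rewrite h', dxx in h. lra.
      - apply (core (n - p)%nat (m - n)%nat); [lia|].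
        replace (m - n + (p + (n - p)))%nat with m by lia.
        replace (p + (n - p))%nat with n by lia. auto. }
    destruct (Hc _ Hcau) as [l Hl]. exists l; split; auto.
    destruct (classic (T l = l)) as [E|E]; auto. exfalso.
    pose proof (dpos _ _ E) as Hr.
    destruct (Hl (d (T l) l / 2) ltac:(lra)) as [N HN].
    pose proof (HN N (Nat.le_refl N)). pose proof (HN (S N) (Nat.le_succ_diag_r N)).
    pose proof (Htri (T l) (Nat.iter (S N) T x0) l).
    pose proof (contr l (Nat.iter N T x0)). simpl in *.
    rewrite (Hsym l) in H2. lra. }
  destruct HX as [x0]. destruct (orbit x0) as [u [Hu _]].
  exists u. split; auto. split.
  - intros v Hv. apply uniq; auto.
  - intro x. destruct (orbit x) as [l [Hl Hconv]].
    assert (l = u) by (apply uniq; auto). subst; auto.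
Qed.
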